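(* Let $\mathbf{W}_0,\mathbf{W}^\star\in\mathbb{R}^{m\times n}$ with $\mathbf{W}^\star\neq\mathbf{W}_0$, let $r\ge1$, and let $L(\mathbf{W})=\frac12\|\mathbf{W}-\mathbf{W}^\star\|_F^2$ (which satisfies the PL inequality on $\mathbb{R}^{m\times n}$ with $\beta=1$). Then $F_{\mathrm{LoRA}}(\mathbf{A},\mathbf{B})=\frac12\|\mathbf{W}_0+\mathbf{A}\mathbf{B}-\mathbf{W}^\star\|_F^2$ does not satisfy the PL inequality on $\mathbb{R}^{m\times r}\times\mathbb{R}^{r\times n}$, i.e. there is no $\beta>0$ with $\frac12\|\nabla F_{\mathrm{LoRA}}(\mathbf{A},\mathbf{B})\|_F^2\ge\beta(F_{\mathrm{LoRA}}(\mathbf{A},\mathbf{B})-F^\star)$ for all $(\mathbf{A},\mathbf{B})$, where $F^\star=\inf F_{\mathrm{LoRA}}$. *)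

(* Defs.v *)
From HB Require Import structures.
From mathcomp Require Import all_boot all_order all_algebra.
From mathcomp Require Import all_classical all_reals all_analysis.
Set Implicit Arguments. Unset Strict Implicit. Unset Printing Implicit Defensive.
Import Order.TTheory GRing.Theory Num.Theory.
Local Open Scope ring_scope.
Local Open Scope classical_set_scope.

Definition frob2 (R : realType) (m n : nat) (M : 'M[R]_(m, n)) : R :=
  \sum_(i < m) \sum_(j < n) M i j ^+ 2.

Definition F_LoRA (R : realType) (m n r : nat) (W0 Wstar : 'M[R]_(m, n))
  (A : 'M[R]_(m, r)) (B : 'M[R]_(r, n)) : R :=
  2^-1 * frob2 (W0 + A *m B - Wstar).

Definition grad_norm2 (R : realType) (m n r : nat)
  (F : 'M[R]_(m, r) -> 'M[R]_(r, n) -> R)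
  (A : 'M[R]_(m, r)) (B : 'M[R]_(r, n)) : R :=
  \sum_(i < m) \sum_(k < r)
     (derive1 (fun t : R => F (A + t *: delta_mx i k) B) 0) ^+ 2
  + \sum_(k < r) \sum_(j < n)
     (derive1 (fun t : R => F A (B + t *: delta_mx k j)) 0) ^+ 2.

Definition inf_val (R : realType) (m n r : nat)
  (F : 'M[R]_(m, r) -> 'M[R]_(r, n) -> R) : R :=
  inf [set F A B | A in setT & B in setT].

Definition PL_pair (R : realType) (m n r : nat)
  (F : 'M[R]_(m, r) -> 'M[R]_(r, n) -> R) (beta : R) : Prop :=
  forall A B, 2^-1 * grad_norm2 F A B >= beta * (F A B - inf_val F).

(* Main.v *)
Require Import Defs.
From HB Require Import structures.
From mathcomp Require Import all_boot all_order all_algebra.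
From mathcomp Require Import all_classical all_reals all_analysis.
From mathcomp Require Import ring lra.
Import Order.TTheory GRing.Theory Num.Theory.
Local Open Scope ring_scope.

Lemma frob2_ge0 (R : realType) (m n : nat) (M : 'M[R]_(m, n)) : 0 <= frob2 M.
Proof. by apply: sumr_ge0 => i _; apply: sumr_ge0 => j _; exact: sqr_ge0. Qed.

Theorem proposition3 (R : realType) (m n r : nat) (W0 Wstar : 'M[R]_(m, n)) :
  Wstar != W0 -> (1 <= r)%N ->
  ~ (exists beta : R, 0 < beta /\ PL_pair (@F_LoRA R m n r W0 Wstar) beta).
Proof.
move=> hne hr [beta [bpos PL]].
have [i [j hij]] : exists i j, Wstar i j != W0 i j.
  apply: contrapT => hn; move/eqP: hne; apply; apply/matrixP => a b.
  apply/eqP; apply: contrapT => hab; apply: hn; exists a, b; exact/negP.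
set k0 : 'I_r := Ordinal hr.
set c := (Wstar - W0) i j.
have c0 : c != 0 by rewrite /c !mxE subr_eq0.
set E := W0 - Wstar.
have H0 : @F_LoRA R m n r W0 Wstar 0 0 = 2^-1 * frob2 E.
  by rewrite /F_LoRA mulmx0 addr0.
set A := delta_mx i k0 : 'M[R]_(m, r).
set B := c *: delta_mx k0 j : 'M[R]_(r, n).
have H1 : F_LoRA W0 Wstar A B = 2^-1 * (frob2 E - c ^+ 2).
  rewrite /F_LoRA; congr (_ * _).
  have -> : W0 + A *m B - Wstar = E + c *: delta_mx i j.
    by rewrite /A /B -scalemxAr mul_delta_mx /E addrAC.
  rewrite /frob2.
  have -> : \sum_(a < m) \sum_(b < n) E a b ^+ 2 =
     \sum_(a < m) \sum_(b < n) ((E + c *: delta_mx i j) a b ^+ 2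
        + (if (a == i) && (b == j) then c ^+ 2 else 0)).
    apply: eq_bigr => a _; apply: eq_bigr => b _.
    rewrite !mxE /E /c !mxE.
    have [->|ai] := eqVneq a i; have [->|bj] := eqVneq b j;
      rewrite /= ?mulr1 ?mulr0 ?addr0 //; ring.
  rewrite -(addrK (c ^+ 2) (\sum_(a < m) _)); congr (_ - _).
  apply/esym; under eq_bigr => a _ do rewrite big_split /=.
  rewrite big_split /=; congr (_ + _).
  rewrite (bigD1 i) //= [X in _ + X = _]big1 ?addr0; last first.
    by move=> a /negbTE ->; rewrite big1.
  rewrite (bigD1 j) //= !eqxx [X in _ + X = _]big1 ?addr0 //.
  by move=> b /negbTE ->.
have Sinf : inf_val (@F_LoRA R m n r W0 Wstar) <= F_LoRA W0 Wstar A B.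
  apply: ge_inf; last by exists A => //; exists B.
  exists 0 => x [A' _ [B' _ <-]].
  by rewrite /F_LoRA mulr_ge0 ?invr_ge0 ?ler0n ?frob2_ge0.
have G0 : grad_norm2 (@F_LoRA R m n r W0 Wstar) 0 0 = 0.
  rewrite /grad_norm2 !big1 ?addr0 // => a _; rewrite big1 // => b _.
  - have -> : (fun t : R => @F_LoRA R m n r W0 Wstar 0 (0 + t *: delta_mx a b))
       = cst (2^-1 * frob2 E) by apply/funext => t; rewrite /F_LoRA mul0mx addr0.
    by rewrite derive1_cst expr2 mulr0.
  - have -> : (fun t : R => @F_LoRA R m n r W0 Wstar (0 + t *: delta_mx a b) 0)
       = cst (2^-1 * frob2 E) by apply/funext => t; rewrite /F_LoRA mulmx0 addr0.
    by rewrite derive1_cst expr2 mulr0.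
have := PL 0 0; rewrite G0 mulr0 H0.
have cpos : 0 < c ^+ 2 by rewrite exprn_even_gt0 //.
have : 0 < beta * (2^-1 * frob2 E - inf_val (@F_LoRA R m n r W0 Wstar)).
  apply: mulr_gt0 => //; rewrite subr_gt0; apply: le_lt_trans Sinf _.
  rewrite H1; lra.
by move=> h1 h2; have := lt_le_trans h1 h2; rewrite ltxx.
Qed.
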